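(* Let $Q$ be a conjunctive query over $\mathcal{D}^p$ and $D^p$ an instance of $\mathcal{D}^p$ consistent w.r.t. a set $\mathcal{IC}$ of denial constraints. For each pair $\langle\vec t,[p^{\min},p^{\max}]\rangle\in Ans(Q,D^p,\mathcal{IC})$ and each $p\in[p^{\min},p^{\max}]$, there is a model $M$ of $D^p$ w.r.t. $\mathcal{IC}$ such that $\langle\vec t,p\rangle\in Ans^M(Q,D^p,\mathcal{IC})$.
   Context: A PDB instance $D^p$ of a schema $\mathcal{D}^p$ is a finite set of tuples, each with a probability $p(t)\in[0,1]$. Possible worlds are subsets of its tuples ($pwd(D^p)$); an interpretation is a probability distribution on $pwd(D^p)$ such that the total probability of worlds containing $t$ is $p(t)$. For a set $\mathcal{IC}$ of denial constraints (formulas $\forall\vec x.\neg[R_1(\vec x_1)\wedge\dots\wedge R_m(\vec x_m)\wedge\phi]$, $\phi$ a conjunction of comparisons), a model is an interpretation assigning probability $0$ to every world violating $\mathcal{IC}$; $\mathcal{M}(D^p,\mathcal{IC})$ is the set of models. A conjunctive query is $Q(\vec x)=\exists\vec z.\,R_1(\vec y_1)\wedge\dots\wedge R_m(\vec y_m)\wedge\phi(\vec y_1,\dots,\vec y_m)$ with $\phi$ a conjunction of comparisons. For a model $M$, $Ans^M(Q,D^p,\mathcal{IC})$ is the set of pairs $\langle\vec t,p^M_Q(\vec t)\rangle$ for ground tuples $\vec t$ such that $w\models Q(\vec t)$ for some $w\in pwd(D^p)$, where $p^M_Q(\vec t)=\sum_{w\in pwd(D^p),\,w\models Q(\vec t)}M(w)$.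 $Ans(Q,D^p,\mathcal{IC})$ is the set of pairs $\langle\vec t,[p^{\min},p^{\max}]\rangle$ for $\vec t$ occurring in $Ans^M$ for some model $M$, with $p^{\min}=\min_{M\in\mathcal{M}(D^p,\mathcal{IC})}p^M_Q(\vec t)$ and $p^{\max}=\max_{M\in\mathcal{M}(D^p,\mathcal{IC})}p^M_Q(\vec t)$. *)

(* Defs.v *)
From HB Require Import structures.
From mathcomp Require Import all_boot all_order all_algebra.
From Stdlib Require List.
From mathcomp Require Import boolp reals.
Set Implicit Arguments.
Unset Strict Implicit.
Unset Printing Implicit Defensive.
Import Order.TTheory GRing.Theory Num.Theory.
Local Open Scope ring_scope.

(* A PDB instance with n tuples is [D : 'I_n -> fact] (injective: a set of
   tuples) together with [p : 'I_n -> R]; possible worlds are [{set 'I_n}]. *)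

Section PDB.
Variables (Rel : eqType) (ar : Rel -> nat).
Variables (dC : Order.disp_t) (C : orderType dC).

Inductive term := Var of nat | Cst of C.

Definition fact := (Rel * seq C)%type.

Record atom := Atom { arel : Rel ; aargs : seq term }.

Inductive cmp_op := CEq | CNeq | CLt | CLe | CGt | CGe.

Record comparison := Cmp { cop : cmp_op ; clhs : term ; crhs : term }.

Definition eval_term (v : nat -> C) (t : term) : C :=
  match t with Var x => v x | Cst c => c end.

Definition eval_cmp (v : nat -> C) (c : comparison) : bool :=
  let a := eval_term v (clhs c) in
  let b := eval_term v (crhs c) in
  match cop c with
  | CEq => a == b
  | CNeq => a != b
  | CLt => (a < b)%O
  | CLe => (a <= b)%O
  | CGt => (b < a)%O
  | CGe => (b <= a)%O
  end.

Definition inst_atom (v : nat -> C) (a : atom) : fact :=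
  (arel a, map (eval_term v) (aargs a)).

Definition wf_atom (a : atom) : Prop := size (aargs a) = ar (arel a).

(* Denial constraint  forall x. ~ [R1(x1) /\ ... /\ Rm(xm) /\ phi] *)
Record denial := Denial { dc_atoms : seq atom ; dc_cmps : seq comparison }.

(* Conjunctive query  Q(x) = exists z. R1(y1) /\ ... /\ Rm(ym) /\ phi;
   [q_head] lists the free (answer) variables x; all other variables are
   existentially quantified. *)
Record cq := CQ { q_head : seq nat ; q_atoms : seq atom ; q_cmps : seq comparison }.

Definition wf_denial (dc : denial) : Prop :=
  forall a, List.In a (dc_atoms dc) -> wf_atom a.

Definition wf_cq (Q : cq) : Prop :=
  forall a, List.In a (q_atoms Q) -> wf_atom a.

Variable n : nat.
Variable D : 'I_n -> fact.

Definition wf_instance : Prop :=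
  injective D /\ forall i, size (D i).2 = ar (D i).1.

Definition in_world (w : {set 'I_n}) (f : fact) : Prop :=
  exists2 i, i \in w & D i = f.

Definition violates (IC : seq denial) (w : {set 'I_n}) : Prop :=
  exists2 dc, List.In dc IC &
    exists v : nat -> C,
      (forall a, List.In a (dc_atoms dc) -> in_world w (inst_atom v a)) /\
      (forall c, List.In c (dc_cmps dc) -> eval_cmp v c).

Definition sat_q (Q : cq) (w : {set 'I_n}) (t : seq C) : Prop :=
  exists v : nat -> C,
    map v (q_head Q) = t /\
    (forall a, List.In a (q_atoms Q) -> in_world w (inst_atom v a)) /\
    (forall c, List.In c (q_cmps Q) -> eval_cmp v c).

Variable R : realType.
Variable p : 'I_n -> R.

Definition probs_ok : Prop := forall i, 0 <= p i <= 1.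

Definition is_interp (M : {ffun {set 'I_n} -> R}) : Prop :=
  (forall w, 0 <= M w) /\
  \sum_(w : {set 'I_n}) M w = 1 /\
  (forall i, \sum_(w : {set 'I_n} | i \in w) M w = p i).

Definition is_model (IC : seq denial) (M : {ffun {set 'I_n} -> R}) : Prop :=
  is_interp M /\ (forall w, violates IC w -> M w = 0).

Definition consistent (IC : seq denial) : Prop :=
  exists M, is_model IC M.

Definition pQ (Q : cq) (M : {ffun {set 'I_n} -> R}) (t : seq C) : R :=
  \sum_(w : {set 'I_n} | `[< sat_q Q w t >]) M w.

Definition in_AnsM (Q : cq) (M : {ffun {set 'I_n} -> R}) (t : seq C) (q : R)
  : Prop :=
  (exists w, sat_q Q w t) /\ pQ Q M t = q.

Definition in_Ans (IC : seq denial) (Q : cq) (t : seq C) (pmin pmax : R)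
  : Prop :=
  (exists M, is_model IC M /\ exists q, in_AnsM Q M t q) /\
  ((exists M, is_model IC M /\ pQ Q M t = pmin) /\
     forall M, is_model IC M -> pmin <= pQ Q M t) /\
  ((exists M, is_model IC M /\ pQ Q M t = pmax) /\
     forall M, is_model IC M -> pQ Q M t <= pmax).

End PDB.

(* Main.v *)
Require Import Defs.
From HB Require Import structures.
From mathcomp Require Import all_boot all_order all_algebra.
From Stdlib Require List.
From mathcomp Require Import boolp reals.
From mathcomp Require Import ring.
Import Order.TTheory GRing.Theory Num.Theory.
Local Open Scope ring_scope.

Lemma mix_model
  (Rel : eqType) (dC : Order.disp_t) (C : orderType dC)
  (n : nat) (D : 'I_n -> fact Rel C) (R : realType) (p : 'I_n -> R)
  (IC : seq (denial Rel C)) (M1 M2 : {ffun {set 'I_n} -> R}) (a : R) :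
  0 <= a <= 1 -> is_model D p IC M1 -> is_model D p IC M2 ->
  is_model D p IC [ffun w => a * M1 w + (1 - a) * M2 w].
Proof.
move=> /andP[a0 a1] [[P1 [S1 I1]] V1] [[P2 [S2 I2]] V2].
split; [split; [|split]|].
- move=> w; rewrite ffunE addr_ge0 // mulr_ge0 //.
  by rewrite subr_ge0.
- under eq_bigr => w _ do rewrite ffunE.
  by rewrite big_split /= -!mulr_sumr S1 S2 !mulr1 addrC subrK.
- move=> i; under eq_bigr => w _ do rewrite ffunE.
  by rewrite big_split /= -!mulr_sumr I1 I2 -mulrDl addrC subrK mul1r.
- move=> w Hw; rewrite ffunE V1 // V2 //; by rewrite !mulr0 addr0.
Qed.

Lemma mix_pQ
  (Rel : eqType) (dC : Order.disp_t) (C : orderType dC)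
  (n : nat) (D : 'I_n -> fact Rel C) (R : realType)
  (Q : cq Rel C) (M1 M2 : {ffun {set 'I_n} -> R}) (a : R) t :
  pQ D Q [ffun w => a * M1 w + (1 - a) * M2 w] t =
  a * pQ D Q M1 t + (1 - a) * pQ D Q M2 t.
Proof.
rewrite /pQ; under eq_bigr => w _ do rewrite ffunE.
by rewrite big_split /= -!mulr_sumr.
Qed.

Theorem proposition2
  (Rel : eqType) (ar : Rel -> nat) (dC : Order.disp_t) (C : orderType dC)
  (n : nat) (D : 'I_n -> fact Rel C) (R : realType) (p : 'I_n -> R)
  (IC : seq (denial Rel C)) (Q : cq Rel C)
  (HD : wf_instance ar D) (Hp : probs_ok p)
  (HIC : forall dc, List.In dc IC -> wf_denial ar dc) (HQ : wf_cq ar Q)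
  (Hcons : consistent D p IC)
  (t : seq C) (pmin pmax : R)
  (Hans : in_Ans D p IC Q t pmin pmax)
  (q : R) (Hq : pmin <= q <= pmax) :
  exists M : {ffun {set 'I_n} -> R},
    is_model D p IC M /\ in_AnsM D Q M t q.
Proof.
case: Hans => [[M0 [_ [q0 [Hex _]]]] [[[M1 [HM1 E1]] _] [[M2 [HM2 E2]] _]]].
case/andP: Hq => h1 h2.
have [eqm|neqm] := eqVneq pmax pmin.
  exists M1; split => //; split => //.
  by rewrite E1; apply/eqP; rewrite eq_le h1 -eqm h2.
have lt : 0 < pmax - pmin by rewrite subr_gt0 lt_neqAle eq_sym neqm (le_trans h1 h2).
set a := (pmax - q) / (pmax - pmin).
have a0 : 0 <= a by apply: divr_ge0; [rewrite subr_ge0 | apply: ltW].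
have a1 : a <= 1 by rewrite ler_pdivrMr // mul1r lerD2l lerN2.
exists [ffun w => a * M1 w + (1 - a) * M2 w]; split.
  by apply: mix_model => //; rewrite a0 a1.
split => //; rewrite mix_pQ E1 E2 /a.
have nz : pmax - pmin != 0 by rewrite gt_eqF.
by field.
Qed.
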